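(* Let $\Pi$ be the topological prismatoid \#1963 of Criado and Santos: a polyhedral $4$-sphere on the $14$ vertices $0,1,2,3,4,5,6,a,b,c,d,e,f,g$ whose simplicial facets are exactly the following $4$-simplices (each string lists the five vertices of a facet): 015cf, 0245f, 0256g, 025ce, 025cg, 06bcf, 125cf, 25bce, 0123d, 0126d, 0134e, 013ae, 013af, 013bd, 013bg, 013cf, 013cg, 0145f, 014ae, 014af, 0156g, 015cg, 016bd, 016bg, 0234e, 023bd, 023be, 024ae, 024af, 025ae, 025af, 026bd, 026be, 026ce, 026cg, 03abe, 03abf, 03bcf, 03bcg, 05ace, 05acf, 06abe, 06abf, 06ace, 06acf, 06bcg, 1234e, 123bd, 123be, 1245f, 124ac, 124af, 124bd, 124be, 124cd, 1256g, 125cg, 126cd, 126cg, 12acf, 13abe, 13abg, 13acf, 13acg, 14abe, 14abg, 14acg, 14bcd, 14bcg, 16bcd, 16bcg, 24abd, 24abe, 24acd, 25abd, 25abe, 25acd, 25acf, 25bcd, 26bcd, 26bce, 3abfg, 3acfg, 3bcfg, 4abcd, 4abcg, 5abde, 5acde, 5bcde, 6abef, 6acef, 6bcef, and which in addition has exactly two non-simplicial facets, its two bases, with vertex sets $\{0,1,\dots,6\}$ and $\{a,b,\dots,g\}$. Then $\Pi$ is not realizable: there is no convex $5$-polytope whose boundary complex is combinatorially isomorphic to $\Pi$.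
   Context: A topological prismatoid (Criado–Santos) is a combinatorial abstraction of a geometric prismatoid, i.e. of a polytope all of whose vertices lie in two parallel facets (the bases); all other facets are here simplices. *)

(* Defs.v *)
From HB Require Import structures.
From mathcomp Require Import all_boot all_order all_algebra.
From mathcomp Require Import reals.
Set Implicit Arguments. Unset Strict Implicit. Unset Printing Implicit Defensive.
Import Order.TTheory GRing.Theory Num.Theory.
Local Open Scope ring_scope.

(* Vertex labelling: 0,...,6 are 0,...,6 and a,b,...,g are 7,8,...,13. *)
Definition simplicial_facets : seq (seq nat) :=
  [:: [:: 0; 1; 5; 9; 12];
      [:: 0; 2; 4; 5; 12];
      [:: 0; 2; 5; 6; 13];
      [:: 0; 2; 5; 9; 11];
      [:: 0; 2; 5; 9; 13];
      [:: 0; 6; 8; 9; 12];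
      [:: 1; 2; 5; 9; 12];
      [:: 2; 5; 8; 9; 11];
      [:: 0; 1; 2; 3; 10];
      [:: 0; 1; 2; 6; 10];
      [:: 0; 1; 3; 4; 11];
      [:: 0; 1; 3; 7; 11];
      [:: 0; 1; 3; 7; 12];
      [:: 0; 1; 3; 8; 10];
      [:: 0; 1; 3; 8; 13];
      [:: 0; 1; 3; 9; 12];
      [:: 0; 1; 3; 9; 13];
      [:: 0; 1; 4; 5; 12];
      [:: 0; 1; 4; 7; 11];
      [:: 0; 1; 4; 7; 12];
      [:: 0; 1; 5; 6; 13];
      [:: 0; 1; 5; 9; 13];
      [:: 0; 1; 6; 8; 10];
      [:: 0; 1; 6; 8; 13];
      [:: 0; 2; 3; 4; 11];
      [:: 0; 2; 3; 8; 10];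
      [:: 0; 2; 3; 8; 11];
      [:: 0; 2; 4; 7; 11];
      [:: 0; 2; 4; 7; 12];
      [:: 0; 2; 5; 7; 11];
      [:: 0; 2; 5; 7; 12];
      [:: 0; 2; 6; 8; 10];
      [:: 0; 2; 6; 8; 11];
      [:: 0; 2; 6; 9; 11];
      [:: 0; 2; 6; 9; 13];
      [:: 0; 3; 7; 8; 11];
      [:: 0; 3; 7; 8; 12];
      [:: 0; 3; 8; 9; 12];
      [:: 0; 3; 8; 9; 13];
      [:: 0; 5; 7; 9; 11];
      [:: 0; 5; 7; 9; 12];
      [:: 0; 6; 7; 8; 11];
      [:: 0; 6; 7; 8; 12];
      [:: 0; 6; 7; 9; 11];
      [:: 0; 6; 7; 9; 12];
      [:: 0; 6; 8; 9; 13];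
      [:: 1; 2; 3; 4; 11];
      [:: 1; 2; 3; 8; 10];
      [:: 1; 2; 3; 8; 11];
      [:: 1; 2; 4; 5; 12];
      [:: 1; 2; 4; 7; 9];
      [:: 1; 2; 4; 7; 12];
      [:: 1; 2; 4; 8; 10];
      [:: 1; 2; 4; 8; 11];
      [:: 1; 2; 4; 9; 10];
      [:: 1; 2; 5; 6; 13];
      [:: 1; 2; 5; 9; 13];
      [:: 1; 2; 6; 9; 10];
      [:: 1; 2; 6; 9; 13];
      [:: 1; 2; 7; 9; 12];
      [:: 1; 3; 7; 8; 11];
      [:: 1; 3; 7; 8; 13];
      [:: 1; 3; 7; 9; 12];
      [:: 1; 3; 7; 9; 13];
      [:: 1; 4; 7; 8; 11];
      [:: 1; 4; 7; 8; 13];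
      [:: 1; 4; 7; 9; 13];
      [:: 1; 4; 8; 9; 10];
      [:: 1; 4; 8; 9; 13];
      [:: 1; 6; 8; 9; 10];
      [:: 1; 6; 8; 9; 13];
      [:: 2; 4; 7; 8; 10];
      [:: 2; 4; 7; 8; 11];
      [:: 2; 4; 7; 9; 10];
      [:: 2; 5; 7; 8; 10];
      [:: 2; 5; 7; 8; 11];
      [:: 2; 5; 7; 9; 10];
      [:: 2; 5; 7; 9; 12];
      [:: 2; 5; 8; 9; 10];
      [:: 2; 6; 8; 9; 10];
      [:: 2; 6; 8; 9; 11];
      [:: 3; 7; 8; 12; 13];
      [:: 3; 7; 9; 12; 13];
      [:: 3; 8; 9; 12; 13];
      [:: 4; 7; 8; 9; 10];
      [:: 4; 7; 8; 9; 13];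
      [:: 5; 7; 8; 10; 11];
      [:: 5; 7; 9; 10; 11];
      [:: 5; 8; 9; 10; 11];
      [:: 6; 7; 8; 11; 12];
      [:: 6; 7; 9; 11; 12];
      [:: 6; 8; 9; 11; 12]].

Definition base_facets : seq (seq nat) :=
  [:: [:: 0; 1; 2; 3; 4; 5; 6]; [:: 7; 8; 9; 10; 11; 12; 13]].

Definition set_of_labels (s : seq nat) : {set 'I_14} :=
  [set i : 'I_14 | (val i \in s)%N].

Definition Pi_facets : seq {set 'I_14} :=
  map set_of_labels (simplicial_facets ++ base_facets).

Section Realization.
Variable R : realType.

Definition dotp (c x : 'rV[R]_5) : R := \sum_(k < 5) c 0 k * x 0 k.

(* Rows (p i, 1) for i in S (zero rows otherwise); rank = affine dim + 1. *)
Definition hom_mx (p : 'I_14 -> 'rV[R]_5) (S : {set 'I_14}) : 'M[R]_(14, 5 + 1) :=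
  \matrix_(i < 14) (if i \in S then row_mx (p i) (const_mx 1) else 0).

Definition exposed_face (p : 'I_14 -> 'rV[R]_5) (S : {set 'I_14}) : Prop :=
  exists (c : 'rV[R]_5) (d : R), c != 0 /\
    (forall i, dotp c (p i) <= d) /\ (forall i, dotp c (p i) = d <-> i \in S).

Definition is_vertex p (i : 'I_14) := exposed_face p [set i].

(* Facets of a 5-polytope: faces whose affine hull has dimension 4. *)
Definition is_facet p (S : {set 'I_14}) :=
  exposed_face p S /\ \rank (hom_mx p S) = 5%N.

(* conv(p) is a convex 5-polytope with vertex set exactly {p i}, the labelling
   i |-> p i is a bijection onto the vertices, and its facets (as vertex sets)
   are exactly the facets of Pi.  Since the face lattice of a polytope is
   determined by its vertex-facet incidences, this says the boundary complex
   of conv(p) is combinatorially isomorphic to Pi. *)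
Definition realizes_Pi (p : 'I_14 -> 'rV[R]_5) : Prop :=
  [/\ \rank (hom_mx p setT) = 6%N,
      (forall i, is_vertex p i) &
      (forall S, is_facet p S <-> S \in Pi_facets)].

End Realization.

(* Main.v *)
Require Import Defs.
From HB Require Import structures.
From mathcomp Require Import all_boot all_order all_algebra.
From mathcomp Require Import reals.
From mathcomp Require Import ring lra.
From mathcomp Require Import fingroup perm.
Set Implicit Arguments. Unset Strict Implicit. Unset Printing Implicit Defensive.
Import Order.TTheory GRing.Theory Num.Theory.
Local Open Scope ring_scope.

Section Gen.
Variable R : realType.
Variable p : 'I_14 -> 'rV[R]_5.

Definition hv (n : nat) : 'rV[R]_(5+1) := row_mx (p (inord n)) (const_mx 1).
Definition Mat (s : seq nat) : 'M[R]_6 := \matrix_(i < 6) hv (nth 0%N s i).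
Definition D s := \det (Mat s).
Definition psi (w : 'cV[R]_(5+1)) n := (hv n *m w) 0 0.

Definition drop_at k (s : seq nat) := take k s ++ drop k.+1 s.

Lemma nth_drop_at (s : seq nat) (i : 'I_7) (k : 'I_6) : size s = 7%N ->
  nth 0%N (drop_at i s) k = nth 0%N s (lift i k).
Proof.
move=> hs; rewrite /drop_at nth_cat size_take hs.
case: i => i hi /=. rewrite /bump.
rewrite hi.
case: (ltnP k i) => hk.
  by rewrite nth_take.
by rewrite nth_drop add1n addSn subnKC.
Qed.

Lemma cramer (s : seq nat) w : size s = 7%N ->
  \sum_(k < 7) (-1) ^+ (k + 6) * D (drop_at k s) * psi w (nth 0%N s k) = 0.
Proof.
move=> hs.
pose V : 'M[R]_(7,6) := \matrix_(i < 7) hv (nth 0%N s i).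
pose A : 'M[R]_7 := row_mx V (V *m w).
have detA : \det A = 0.
  apply/eqP; apply: contraT => nz.
  have : A \in unitmx by rewrite unitmxE unitfE.
  move/mxrank_unit => rk.
  have := mxrankM_maxl V (row_mx 1%:M w).
  by rewrite mul_mx_row mulmx1 -/A rk (leqNgt 7) ltnS rank_leq_col.
rewrite (expand_det_col A ord_max) in detA.
rewrite -[RHS]detA; apply: eq_bigr => i _.
rewrite /cofactor [RHS]mulrC; congr (_ * _ * _).
  congr (\det _); apply/matrixP => k l.
  rewrite [RHS]mxE [RHS]mxE.
  have -> : lift ord_max l = lshift 1 l :> 'I_(6+1).
  by apply/val_inj => /=; rewrite /bump leqNgt ltn_ord.
  rewrite (_ : A (lift i k) (lshift 1 l) = V (lift i k) l); last exact: row_mxEl.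
  rewrite /Mat mxE (nth_drop_at _ _ hs).
  by rewrite /V !mxE.
have -> : (ord_max : 'I_7) = rshift 6 (0 : 'I_1) :> 'I_(6+1) by apply: val_inj.
rewrite (_ : A i (rshift 6 0) = (V *m w) i 0); last exact: row_mxEr.
rewrite /psi !mxE; apply: eq_bigr => l _.
by rewrite /V !mxE.
Qed.


Lemma cramer7 a0 a1 a2 a3 a4 a5 a6 w :
  D [:: a1;a2;a3;a4;a5;a6] * psi w a0 - D [:: a0;a2;a3;a4;a5;a6] * psi w a1
+ D [:: a0;a1;a3;a4;a5;a6] * psi w a2 - D [:: a0;a1;a2;a4;a5;a6] * psi w a3
+ D [:: a0;a1;a2;a3;a5;a6] * psi w a4 - D [:: a0;a1;a2;a3;a4;a6] * psi w a5
+ D [:: a0;a1;a2;a3;a4;a5] * psi w a6 = 0.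
Proof.
have := @cramer [:: a0;a1;a2;a3;a4;a5;a6] w erefl.
rewrite !big_ord_recl big_ord0 /= /bump /drop_at /= !addnE /= => H.
rewrite -[RHS]H !exprS expr0; ring.
Qed.

Definition sw (s : seq nat) (i j : nat) :=
  mkseq (fun k => nth 0%N s (if k == i then j else if k == j then i else k)) 6.

Lemma Dswap s (i j : 'I_6) : i != j -> D (sw s i j) = - D s.
Proof.
move=> nij; rewrite /D.
have -> : Mat (sw s i j) = xrow i j (Mat s).
  apply/matrixP => k l; rewrite /xrow /row_perm !mxE /sw nth_mkseq //.
  suff -> : (if (k:nat) == (i:nat) then (j:nat) else if (k:nat) == (j:nat) then (i:nat) else (k:nat)) = tperm i j k by [].
  case: tpermP => [->|->|]; first by rewrite eqxx.
    by rewrite eqxx; case: eqP => [->|].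
  move=> ki kj; case: eqP => [/val_inj e|_] //.
  by case: eqP => [/val_inj e|_] //.
rewrite /D xrowE det_mulmx /tperm_mx det_perm odd_tperm nij.
by rewrite expr1 mulN1r.
Qed.

Definition Wf (c : 'rV[R]_5) (d : R) : 'cV[R]_(5+1) := col_mx c^T (const_mx (- d)).

Lemma psiW c d n : psi (Wf c d) n = dotp c (p (inord n)) - d.
Proof.
rewrite /psi /hv /Wf mul_row_col !mxE /dotp big_ord1 !mxE mul1r; congr (_ + _).
by apply: eq_bigr => k _; rewrite !mxE mulrC.
Qed.

Lemma facet_W (S : {set 'I_14}) : exposed_face p S ->
  exists W, forall n, (n < 14)%N ->
    (inord n \in S -> psi W n = 0) /\ (inord n \notin S -> psi W n < 0).
Proof.
case=> c [d [_ [hle heq]]]; exists (Wf c d) => n _; rewrite psiW; split.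
  by move/heq => ->; rewrite subrr.
move=> nS; rewrite subr_lt0 lt_neqAle hle andbT.
by apply/eqP => /heq; apply/negP.
Qed.

Lemma in_labels l n : (n < 14)%N -> (inord n \in set_of_labels l) = (n \in l).
Proof. by move=> h; rewrite inE /= inordK. Qed.

Lemma D_nz l j : is_facet p (set_of_labels l) -> size l = 5%N ->
  all (fun x => x < 14)%N l -> (j < 14)%N -> j \notin l -> D (l ++ [:: j]) != 0.
Proof.
move=> [hexp hrk] hsz hall hj hjl.
have [W hW] := facet_W hexp.
set S := set_of_labels l.
set M := Mat (l ++ [:: j]).
have sub : (hom_mx p S <= M)%MS.
  apply/row_subP => i; rewrite rowK; case: ifP => iS; last by rewrite sub0mx.
  have il : (val i \in l) by move: iS; rewrite inE.
  have k5 : (index (val i) l < size l)%N by rewrite index_mem.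
  rewrite hsz in k5.
  have kl : (index (val i) l < 6)%N by apply: ltn_trans k5 _.
  have -> : row_mx (p i) (const_mx 1) = row (Ordinal kl) M.
    rewrite rowK /hv nth_cat hsz.
    by rewrite /= k5 nth_index // inord_val.
  exact: row_sub.
have rk5 := mxrankS sub; rewrite hrk in rk5.
have [rk6|rkn6] := eqVneq (\rank M) 6%N.
  have : M \in unitmx by rewrite -row_free_unit /row_free rk6.
  by rewrite unitmxE unitfE.
have rkM : \rank M = 5%N.
  by apply/eqP; rewrite eqn_leq rk5 andbT -ltnS ltn_neqAle rkn6 rank_leq_col.
have := mxrank_leqif_sup sub; rewrite hrk rkM => /leqif_refl MS.
have : (row 5 M <= hom_mx p S)%MS by apply: submx_trans (row_sub _ _) MS.
case/submxP => u hu.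
have h0 : hom_mx p S *m W = 0.
  apply/row_matrixP => i; rewrite row_mul rowK row0; case: ifP => iS; last by rewrite mul0mx.
  have e := (hW (val i) (ltn_ord i)).1; rewrite /psi /hv inord_val in e.
  by apply/rowP => z; rewrite ord1 e ?iS ?mxE.
have := (hW j hj).2; rewrite in_labels // hjl => /(_ isT).
rewrite /psi (_ : hv j = row 5 M); last by rewrite rowK /= nth_cat hsz /=.
by rewrite hu -mulmxA h0 mulmx0 mxE ltxx.
Qed.

Lemma facet_rel W f1 f2 f3 f4 f5 j k :
  psi W f1 = 0 -> psi W f2 = 0 -> psi W f3 = 0 -> psi W f4 = 0 -> psi W f5 = 0 ->
  D [:: f1;f2;f3;f4;f5;j] * psi W k = D [:: f1;f2;f3;f4;f5;k] * psi W j.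
Proof.
move=> h1 h2 h3 h4 h5; have := cramer7 f1 f2 f3 f4 f5 j k W.
rewrite h1 h2 h3 h4 h5 !mulr0 => h; lra.
Qed.

Lemma D_rep s (i j : 'I_6) : i != j -> nth 0%N s i = nth 0%N s j -> D s = 0.
Proof.
move=> nij e; apply: (determinant_alternate nij) => l.
by rewrite /Mat !mxE e.
Qed.

Lemma Dlin a1 a2 a3 a4 w : exists W, forall x, D [:: a1;a2;a3;a4;x;w] = psi W x.
Proof.
pose M0 := Mat [:: a1;a2;a3;a4;0%N;w].
exists (\col_j cofactor M0 4 j) => x.
rewrite /D (expand_det_row _ 4) /psi mxE; apply: eq_bigr => j _.
rewrite !mxE; congr (_ * _).
rewrite /cofactor; congr (_ * \det _).
apply/matrixP => k l; rewrite !mxE.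
by case: k => [[|[|[|[|[|k]]]]] hk].
Qed.

Lemma gp_rel a1 a2 a3 a4 x y z w :
  D [:: a1;a2;a3;a4;y;z] * D [:: a1;a2;a3;a4;x;w]
  - D [:: a1;a2;a3;a4;x;z] * D [:: a1;a2;a3;a4;y;w]
  + D [:: a1;a2;a3;a4;x;y] * D [:: a1;a2;a3;a4;z;w] = 0.
Proof.
have [W hW] := Dlin a1 a2 a3 a4 w.
have := cramer7 a1 a2 a3 a4 x y z W.
rewrite -!hW.
rewrite (@D_rep [:: a1;a2;a3;a4;a1;w] 0 4) // (@D_rep [:: a1;a2;a3;a4;a2;w] 1 4) //.
rewrite (@D_rep [:: a1;a2;a3;a4;a3;w] 2 4) // (@D_rep [:: a1;a2;a3;a4;a4;w] 3 4) //.
rewrite !mulr0 => h; lra.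
Qed.

Lemma edge_p (X m1 m2 a b : R) : a < 0 -> b < 0 -> m1 * a = m2 * b -> 0 < X * m1 -> 0 < X * m2.
Proof. move=> ha hb e h. have : X * m2 * b = X * m1 * a by rewrite -!mulrA e. nra. Qed.
Lemma edge_n (X m1 m2 a b : R) : a < 0 -> b < 0 -> m1 * a = m2 * b -> X * m1 < 0 -> X * m2 < 0.
Proof. move=> ha hb e h. have : X * m2 * b = X * m1 * a by rewrite -!mulrA e. nra. Qed.
Lemma sw_p (X a b : R) : b = - a -> 0 < X * a -> X * b < 0.
Proof. by move=> -> h; rewrite mulrN oppr_lt0. Qed.
Lemma sw_n (X a b : R) : b = - a -> X * a < 0 -> 0 < X * b.
Proof. by move=> -> h; rewrite mulrN oppr_gt0. Qed.
Lemma prod_pp (X a b : R) : 0 < X * a -> 0 < X * b -> 0 < a * b.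
Proof. move=> h1 h2. have : 0 < (X * a) * (X * b) by nra. have : 0 <= X * X by nra. nra. Qed.
Lemma prod_nn (X a b : R) : X * a < 0 -> X * b < 0 -> 0 < a * b.
Proof. move=> h1 h2. have : 0 < (X * a) * (X * b) by nra. have : 0 <= X * X by nra. nra. Qed.
Lemma prod_pn (X a b : R) : 0 < X * a -> X * b < 0 -> a * b < 0.
Proof. move=> h1 h2. have : (X * a) * (X * b) < 0 by nra. have : 0 <= X * X by nra. nra. Qed.
Lemma prod_np (X a b : R) : X * a < 0 -> 0 < X * b -> a * b < 0.
Proof. move=> h1 h2. have : (X * a) * (X * b) < 0 by nra. have : 0 <= X * X by nra. nra. Qed.
Lemma un_pp (X a b : R) : 0 < a * b -> 0 < X * a -> 0 < X * b.
Proof. move=> h1 h2. nra. Qed.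
Lemma un_pn (X a b : R) : 0 < a * b -> X * a < 0 -> X * b < 0.
Proof. move=> h1 h2. nra. Qed.
Lemma un_np (X a b : R) : a * b < 0 -> 0 < X * a -> X * b < 0.
Proof. move=> h1 h2. nra. Qed.
Lemma un_nn (X a b : R) : a * b < 0 -> X * a < 0 -> 0 < X * b.
Proof. move=> h1 h2. nra. Qed.
Lemma sq_pos (X : R) : X != 0 -> 0 < X * X.
Proof. by move=> h; rewrite -expr2 exprn_even_gt0 //= h orbT. Qed.

Lemma isfacet l : realizes_Pi p -> l \in simplicial_facets ++ base_facets ->
  is_facet p (set_of_labels l).
Proof. by case=> _ _ hf hl; apply/hf; apply: map_f. Qed.

Lemma getW l : realizes_Pi p -> l \in simplicial_facets ++ base_facets ->
  exists W, forall n, (n < 14)%N -> (n \in l -> psi W n = 0) /\ (n \notin l -> psi W n < 0).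
Proof.
move=> h hl; have [hexp _] := isfacet h hl; have [W hW] := facet_W hexp.
by exists W => n hn; rewrite -!(in_labels l hn); exact: hW.
Qed.

Lemma main_contra : realizes_Pi p -> False.
Proof.
move=> h.
have nz : D [:: 0; 1; 2; 3; 10; 4] != 0 := D_nz (l:=[:: 0; 1; 2; 3; 10]) (j:=4) (isfacet h (l:=[:: 0; 1; 2; 3; 10]) isT) erefl isT isT isT.
pose X := D [:: 0; 1; 2; 3; 10; 4].
have f0 : 0 < X * D [:: 0; 1; 2; 3; 10; 4] := sq_pos nz.
have [W0 hW0] := getW h (l:=[:: 0; 1; 2; 3; 4; 5; 6]) isT.
have f1 : X * D [:: 0; 1; 2; 3; 4; 10] < 0 := sw_p (@Dswap [:: 0; 1; 2; 3; 10; 4] (@Ordinal 6 4 isT) (@Ordinal 6 5 isT) isT) f0.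
have f2 : X * D [:: 0; 1; 2; 3; 4; 12] < 0 := edge_n ((hW0 12 isT).2 isT) ((hW0 10 isT).2 isT) (@facet_rel W0 0 1 2 3 4 10 12 ((hW0 0 isT).1 isT) ((hW0 1 isT).1 isT) ((hW0 2 isT).1 isT) ((hW0 3 isT).1 isT) ((hW0 4 isT).1 isT)) f1.
have f3 : X * D [:: 0; 1; 2; 3; 4; 9] < 0 := edge_n ((hW0 9 isT).2 isT) ((hW0 10 isT).2 isT) (@facet_rel W0 0 1 2 3 4 10 9 ((hW0 0 isT).1 isT) ((hW0 1 isT).1 isT) ((hW0 2 isT).1 isT) ((hW0 3 isT).1 isT) ((hW0 4 isT).1 isT)) f1.
have f4 : X * D [:: 0; 1; 2; 3; 4; 11] < 0 := edge_n ((hW0 11 isT).2 isT) ((hW0 10 isT).2 isT) (@facet_rel W0 0 1 2 3 4 10 11 ((hW0 0 isT).1 isT) ((hW0 1 isT).1 isT) ((hW0 2 isT).1 isT) ((hW0 3 isT).1 isT) ((hW0 4 isT).1 isT)) f1.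
have [W1 hW1] := getW h (l:=[:: 0; 1; 3; 4; 11]) isT.
have f5 : 0 < X * D [:: 0; 1; 3; 2; 4; 11] := sw_n (@Dswap [:: 0; 1; 2; 3; 4; 11] (@Ordinal 6 2 isT) (@Ordinal 6 3 isT) isT) f4.
have f6 : X * D [:: 0; 1; 3; 4; 2; 11] < 0 := sw_p (@Dswap [:: 0; 1; 3; 2; 4; 11] (@Ordinal 6 3 isT) (@Ordinal 6 4 isT) isT) f5.
have f7 : 0 < X * D [:: 0; 1; 3; 4; 11; 2] := sw_n (@Dswap [:: 0; 1; 3; 4; 2; 11] (@Ordinal 6 4 isT) (@Ordinal 6 5 isT) isT) f6.
have f8 : 0 < X * D [:: 0; 1; 3; 4; 11; 7] := edge_p ((hW1 7 isT).2 isT) ((hW1 2 isT).2 isT) (@facet_rel W1 0 1 3 4 11 2 7 ((hW1 0 isT).1 isT) ((hW1 1 isT).1 isT) ((hW1 3 isT).1 isT) ((hW1 4 isT).1 isT) ((hW1 11 isT).1 isT)) f7.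
have [W2 hW2] := getW h (l:=[:: 0; 1; 3; 7; 11]) isT.
have f9 : X * D [:: 0; 1; 3; 7; 11; 4] < 0 := sw_p (@Dswap [:: 0; 1; 3; 4; 11; 7] (@Ordinal 6 3 isT) (@Ordinal 6 5 isT) isT) f8.
have f10 : X * D [:: 0; 1; 3; 7; 11; 12] < 0 := edge_n ((hW2 12 isT).2 isT) ((hW2 4 isT).2 isT) (@facet_rel W2 0 1 3 7 11 4 12 ((hW2 0 isT).1 isT) ((hW2 1 isT).1 isT) ((hW2 3 isT).1 isT) ((hW2 7 isT).1 isT) ((hW2 11 isT).1 isT)) f9.
have [W3 hW3] := getW h (l:=[:: 0; 1; 3; 7; 12]) isT.
have f11 : 0 < X * D [:: 0; 1; 3; 7; 12; 11] := sw_n (@Dswap [:: 0; 1; 3; 7; 11; 12] (@Ordinal 6 4 isT) (@Ordinal 6 5 isT) isT) f10.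
have f12 : 0 < X * D [:: 0; 1; 3; 7; 12; 2] := edge_p ((hW3 2 isT).2 isT) ((hW3 11 isT).2 isT) (@facet_rel W3 0 1 3 7 12 11 2 ((hW3 0 isT).1 isT) ((hW3 1 isT).1 isT) ((hW3 3 isT).1 isT) ((hW3 7 isT).1 isT) ((hW3 12 isT).1 isT)) f11.
have f13 : X * D [:: 0; 1; 2; 7; 12; 3] < 0 := sw_p (@Dswap [:: 0; 1; 3; 7; 12; 2] (@Ordinal 6 2 isT) (@Ordinal 6 5 isT) isT) f12.
have f14 : 0 < X * D [:: 0; 1; 2; 3; 12; 7] := sw_n (@Dswap [:: 0; 1; 2; 7; 12; 3] (@Ordinal 6 3 isT) (@Ordinal 6 5 isT) isT) f13.
have f15 : X * D [:: 0; 1; 2; 3; 7; 12] < 0 := sw_p (@Dswap [:: 0; 1; 2; 3; 12; 7] (@Ordinal 6 4 isT) (@Ordinal 6 5 isT) isT) f14.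
have f16 : X * D [:: 0; 1; 2; 3; 4; 7] < 0 := edge_n ((hW0 7 isT).2 isT) ((hW0 10 isT).2 isT) (@facet_rel W0 0 1 2 3 4 10 7 ((hW0 0 isT).1 isT) ((hW0 1 isT).1 isT) ((hW0 2 isT).1 isT) ((hW0 3 isT).1 isT) ((hW0 4 isT).1 isT)) f1.
have [W4 hW4] := getW h (l:=[:: 0; 1; 2; 3; 10]) isT.
have f17 : 0 < X * D [:: 0; 1; 2; 3; 10; 8] := edge_p ((hW4 8 isT).2 isT) ((hW4 4 isT).2 isT) (@facet_rel W4 0 1 2 3 10 4 8 ((hW4 0 isT).1 isT) ((hW4 1 isT).1 isT) ((hW4 2 isT).1 isT) ((hW4 3 isT).1 isT) ((hW4 10 isT).1 isT)) f0.
have [W5 hW5] := getW h (l:=[:: 0; 1; 3; 8; 10]) isT.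
have f18 : X * D [:: 0; 1; 3; 2; 10; 8] < 0 := sw_p (@Dswap [:: 0; 1; 2; 3; 10; 8] (@Ordinal 6 2 isT) (@Ordinal 6 3 isT) isT) f17.
have f19 : 0 < X * D [:: 0; 1; 3; 8; 10; 2] := sw_n (@Dswap [:: 0; 1; 3; 2; 10; 8] (@Ordinal 6 3 isT) (@Ordinal 6 5 isT) isT) f18.
have f20 : 0 < X * D [:: 0; 1; 3; 8; 10; 13] := edge_p ((hW5 13 isT).2 isT) ((hW5 2 isT).2 isT) (@facet_rel W5 0 1 3 8 10 2 13 ((hW5 0 isT).1 isT) ((hW5 1 isT).1 isT) ((hW5 3 isT).1 isT) ((hW5 8 isT).1 isT) ((hW5 10 isT).1 isT)) f19.
have [W6 hW6] := getW h (l:=[:: 0; 1; 3; 8; 13]) isT.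
have f21 : X * D [:: 0; 1; 3; 8; 13; 10] < 0 := sw_p (@Dswap [:: 0; 1; 3; 8; 10; 13] (@Ordinal 6 4 isT) (@Ordinal 6 5 isT) isT) f20.
have f22 : X * D [:: 0; 1; 3; 8; 13; 9] < 0 := edge_n ((hW6 9 isT).2 isT) ((hW6 10 isT).2 isT) (@facet_rel W6 0 1 3 8 13 10 9 ((hW6 0 isT).1 isT) ((hW6 1 isT).1 isT) ((hW6 3 isT).1 isT) ((hW6 8 isT).1 isT) ((hW6 13 isT).1 isT)) f21.
have [W7 hW7] := getW h (l:=[:: 0; 1; 3; 9; 13]) isT.
have f23 : 0 < X * D [:: 0; 1; 3; 9; 13; 8] := sw_n (@Dswap [:: 0; 1; 3; 8; 13; 9] (@Ordinal 6 3 isT) (@Ordinal 6 5 isT) isT) f22.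
have f24 : 0 < X * D [:: 0; 1; 3; 9; 13; 12] := edge_p ((hW7 12 isT).2 isT) ((hW7 8 isT).2 isT) (@facet_rel W7 0 1 3 9 13 8 12 ((hW7 0 isT).1 isT) ((hW7 1 isT).1 isT) ((hW7 3 isT).1 isT) ((hW7 9 isT).1 isT) ((hW7 13 isT).1 isT)) f23.
have [W8 hW8] := getW h (l:=[:: 0; 1; 3; 9; 12]) isT.
have f25 : X * D [:: 0; 1; 3; 9; 12; 13] < 0 := sw_p (@Dswap [:: 0; 1; 3; 9; 13; 12] (@Ordinal 6 4 isT) (@Ordinal 6 5 isT) isT) f24.
have f26 : X * D [:: 0; 1; 3; 9; 12; 2] < 0 := edge_n ((hW8 2 isT).2 isT) ((hW8 13 isT).2 isT) (@facet_rel W8 0 1 3 9 12 13 2 ((hW8 0 isT).1 isT) ((hW8 1 isT).1 isT) ((hW8 3 isT).1 isT) ((hW8 9 isT).1 isT) ((hW8 12 isT).1 isT)) f25.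
have f27 : 0 < X * D [:: 0; 1; 2; 9; 12; 3] := sw_n (@Dswap [:: 0; 1; 3; 9; 12; 2] (@Ordinal 6 2 isT) (@Ordinal 6 5 isT) isT) f26.
have f28 : X * D [:: 0; 1; 2; 3; 12; 9] < 0 := sw_p (@Dswap [:: 0; 1; 2; 9; 12; 3] (@Ordinal 6 3 isT) (@Ordinal 6 5 isT) isT) f27.
have f29 : 0 < X * D [:: 0; 1; 2; 3; 9; 12] := sw_n (@Dswap [:: 0; 1; 2; 3; 12; 9] (@Ordinal 6 4 isT) (@Ordinal 6 5 isT) isT) f28.
have g0 := @gp_rel 0 1 2 3 4 7 9 12.
have f30 := prod_nn f3 f15.
have f31 := prod_np f16 f29.
have f32 : 0 < D [:: 0; 1; 2; 3; 4; 12] * D [:: 0; 1; 2; 3; 7; 9] by clear -g0 f30 f31; lra.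
have f33 : X * D [:: 0; 1; 2; 3; 7; 9] < 0 := un_pn f32 f2.
have f34 : 0 < X * D [:: 0; 1; 2; 3; 10; 6] := edge_p ((hW4 6 isT).2 isT) ((hW4 4 isT).2 isT) (@facet_rel W4 0 1 2 3 10 4 6 ((hW4 0 isT).1 isT) ((hW4 1 isT).1 isT) ((hW4 2 isT).1 isT) ((hW4 3 isT).1 isT) ((hW4 10 isT).1 isT)) f0.
have [W9 hW9] := getW h (l:=[:: 0; 1; 2; 6; 10]) isT.
have f35 : X * D [:: 0; 1; 2; 6; 10; 3] < 0 := sw_p (@Dswap [:: 0; 1; 2; 3; 10; 6] (@Ordinal 6 3 isT) (@Ordinal 6 5 isT) isT) f34.
have f36 : X * D [:: 0; 1; 2; 6; 10; 9] < 0 := edge_n ((hW9 9 isT).2 isT) ((hW9 3 isT).2 isT) (@facet_rel W9 0 1 2 6 10 3 9 ((hW9 0 isT).1 isT) ((hW9 1 isT).1 isT) ((hW9 2 isT).1 isT) ((hW9 6 isT).1 isT) ((hW9 10 isT).1 isT)) f35.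
have [W10 hW10] := getW h (l:=[:: 1; 2; 6; 9; 10]) isT.
have f37 : 0 < X * D [:: 1; 0; 2; 6; 10; 9] := sw_n (@Dswap [:: 0; 1; 2; 6; 10; 9] (@Ordinal 6 0 isT) (@Ordinal 6 1 isT) isT) f36.
have f38 : X * D [:: 1; 2; 0; 6; 10; 9] < 0 := sw_p (@Dswap [:: 1; 0; 2; 6; 10; 9] (@Ordinal 6 1 isT) (@Ordinal 6 2 isT) isT) f37.
have f39 : 0 < X * D [:: 1; 2; 6; 0; 10; 9] := sw_n (@Dswap [:: 1; 2; 0; 6; 10; 9] (@Ordinal 6 2 isT) (@Ordinal 6 3 isT) isT) f38.
have f40 : X * D [:: 1; 2; 6; 9; 10; 0] < 0 := sw_p (@Dswap [:: 1; 2; 6; 0; 10; 9] (@Ordinal 6 3 isT) (@Ordinal 6 5 isT) isT) f39.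
have f41 : X * D [:: 1; 2; 6; 9; 10; 4] < 0 := edge_n ((hW10 4 isT).2 isT) ((hW10 0 isT).2 isT) (@facet_rel W10 1 2 6 9 10 0 4 ((hW10 1 isT).1 isT) ((hW10 2 isT).1 isT) ((hW10 6 isT).1 isT) ((hW10 9 isT).1 isT) ((hW10 10 isT).1 isT)) f40.
have [W11 hW11] := getW h (l:=[:: 1; 2; 4; 9; 10]) isT.
have f42 : 0 < X * D [:: 1; 2; 4; 9; 10; 6] := sw_n (@Dswap [:: 1; 2; 6; 9; 10; 4] (@Ordinal 6 2 isT) (@Ordinal 6 5 isT) isT) f41.
have f43 : 0 < X * D [:: 1; 2; 4; 9; 10; 7] := edge_p ((hW11 7 isT).2 isT) ((hW11 6 isT).2 isT) (@facet_rel W11 1 2 4 9 10 6 7 ((hW11 1 isT).1 isT) ((hW11 2 isT).1 isT) ((hW11 4 isT).1 isT) ((hW11 9 isT).1 isT) ((hW11 10 isT).1 isT)) f42.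
have [W12 hW12] := getW h (l:=[:: 1; 2; 4; 7; 9]) isT.
have f44 : X * D [:: 1; 2; 4; 7; 10; 9] < 0 := sw_p (@Dswap [:: 1; 2; 4; 9; 10; 7] (@Ordinal 6 3 isT) (@Ordinal 6 5 isT) isT) f43.
have f45 : 0 < X * D [:: 1; 2; 4; 7; 9; 10] := sw_n (@Dswap [:: 1; 2; 4; 7; 10; 9] (@Ordinal 6 4 isT) (@Ordinal 6 5 isT) isT) f44.
have f46 : 0 < X * D [:: 1; 2; 4; 7; 9; 0] := edge_p ((hW12 0 isT).2 isT) ((hW12 10 isT).2 isT) (@facet_rel W12 1 2 4 7 9 10 0 ((hW12 1 isT).1 isT) ((hW12 2 isT).1 isT) ((hW12 4 isT).1 isT) ((hW12 7 isT).1 isT) ((hW12 9 isT).1 isT)) f45.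
have f47 : X * D [:: 0; 2; 4; 7; 9; 1] < 0 := sw_p (@Dswap [:: 1; 2; 4; 7; 9; 0] (@Ordinal 6 0 isT) (@Ordinal 6 5 isT) isT) f46.
have f48 : 0 < X * D [:: 0; 1; 4; 7; 9; 2] := sw_n (@Dswap [:: 0; 2; 4; 7; 9; 1] (@Ordinal 6 1 isT) (@Ordinal 6 5 isT) isT) f47.
have f49 : X * D [:: 0; 1; 2; 7; 9; 4] < 0 := sw_p (@Dswap [:: 0; 1; 4; 7; 9; 2] (@Ordinal 6 2 isT) (@Ordinal 6 5 isT) isT) f48.
have f50 : 0 < X * D [:: 0; 1; 2; 7; 4; 9] := sw_n (@Dswap [:: 0; 1; 2; 7; 9; 4] (@Ordinal 6 4 isT) (@Ordinal 6 5 isT) isT) f49.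
have f51 : X * D [:: 0; 1; 3; 7; 11; 2] < 0 := edge_n ((hW2 2 isT).2 isT) ((hW2 4 isT).2 isT) (@facet_rel W2 0 1 3 7 11 4 2 ((hW2 0 isT).1 isT) ((hW2 1 isT).1 isT) ((hW2 3 isT).1 isT) ((hW2 7 isT).1 isT) ((hW2 11 isT).1 isT)) f9.
have f52 : 0 < X * D [:: 0; 1; 2; 7; 11; 3] := sw_n (@Dswap [:: 0; 1; 3; 7; 11; 2] (@Ordinal 6 2 isT) (@Ordinal 6 5 isT) isT) f51.
have f53 : X * D [:: 0; 1; 2; 7; 3; 11] < 0 := sw_p (@Dswap [:: 0; 1; 2; 7; 11; 3] (@Ordinal 6 4 isT) (@Ordinal 6 5 isT) isT) f52.
have f54 : 0 < X * D [:: 0; 1; 2; 7; 3; 9] := sw_n (@Dswap [:: 0; 1; 2; 3; 7; 9] (@Ordinal 6 3 isT) (@Ordinal 6 4 isT) isT) f33.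
have [W13 hW13] := getW h (l:=[:: 0; 1; 4; 7; 11]) isT.
have f55 : X * D [:: 0; 1; 4; 3; 11; 7] < 0 := sw_p (@Dswap [:: 0; 1; 3; 4; 11; 7] (@Ordinal 6 2 isT) (@Ordinal 6 3 isT) isT) f8.
have f56 : 0 < X * D [:: 0; 1; 4; 7; 11; 3] := sw_n (@Dswap [:: 0; 1; 4; 3; 11; 7] (@Ordinal 6 3 isT) (@Ordinal 6 5 isT) isT) f55.
have f57 : 0 < X * D [:: 0; 1; 4; 7; 11; 2] := edge_p ((hW13 2 isT).2 isT) ((hW13 3 isT).2 isT) (@facet_rel W13 0 1 4 7 11 3 2 ((hW13 0 isT).1 isT) ((hW13 1 isT).1 isT) ((hW13 4 isT).1 isT) ((hW13 7 isT).1 isT) ((hW13 11 isT).1 isT)) f56.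
have f58 : X * D [:: 0; 1; 2; 7; 11; 4] < 0 := sw_p (@Dswap [:: 0; 1; 4; 7; 11; 2] (@Ordinal 6 2 isT) (@Ordinal 6 5 isT) isT) f57.
have f59 : 0 < X * D [:: 0; 1; 2; 7; 4; 11] := sw_n (@Dswap [:: 0; 1; 2; 7; 11; 4] (@Ordinal 6 4 isT) (@Ordinal 6 5 isT) isT) f58.
have f60 : 0 < X * D [:: 0; 1; 2; 7; 4; 3] := sw_n (@Dswap [:: 0; 1; 2; 3; 4; 7] (@Ordinal 6 3 isT) (@Ordinal 6 5 isT) isT) f16.
have f61 : X * D [:: 0; 1; 2; 7; 3; 4] < 0 := sw_p (@Dswap [:: 0; 1; 2; 7; 4; 3] (@Ordinal 6 4 isT) (@Ordinal 6 5 isT) isT) f60.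
have g1 := @gp_rel 0 1 2 7 3 4 9 11.
have f62 := prod_pn f50 f53.
have f63 := prod_pp f54 f59.
have f64 : 0 < D [:: 0; 1; 2; 7; 3; 4] * D [:: 0; 1; 2; 7; 9; 11] by clear -g1 f62 f63; lra.
have f65 : X * D [:: 0; 1; 2; 7; 9; 11] < 0 := un_pn f64 f61.
have [W14 hW14] := getW h (l:=[:: 0; 2; 3; 4; 11]) isT.
have f66 : 0 < X * D [:: 0; 2; 1; 3; 4; 11] := sw_n (@Dswap [:: 0; 1; 2; 3; 4; 11] (@Ordinal 6 1 isT) (@Ordinal 6 2 isT) isT) f4.
have f67 : X * D [:: 0; 2; 3; 1; 4; 11] < 0 := sw_p (@Dswap [:: 0; 2; 1; 3; 4; 11] (@Ordinal 6 2 isT) (@Ordinal 6 3 isT) isT) f66.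
have f68 : 0 < X * D [:: 0; 2; 3; 4; 1; 11] := sw_n (@Dswap [:: 0; 2; 3; 1; 4; 11] (@Ordinal 6 3 isT) (@Ordinal 6 4 isT) isT) f67.
have f69 : X * D [:: 0; 2; 3; 4; 11; 1] < 0 := sw_p (@Dswap [:: 0; 2; 3; 4; 1; 11] (@Ordinal 6 4 isT) (@Ordinal 6 5 isT) isT) f68.
have f70 : X * D [:: 0; 2; 3; 4; 11; 7] < 0 := edge_n ((hW14 7 isT).2 isT) ((hW14 1 isT).2 isT) (@facet_rel W14 0 2 3 4 11 1 7 ((hW14 0 isT).1 isT) ((hW14 2 isT).1 isT) ((hW14 3 isT).1 isT) ((hW14 4 isT).1 isT) ((hW14 11 isT).1 isT)) f69.
have [W15 hW15] := getW h (l:=[:: 0; 2; 4; 7; 11]) isT.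
have f71 : 0 < X * D [:: 0; 2; 4; 3; 11; 7] := sw_n (@Dswap [:: 0; 2; 3; 4; 11; 7] (@Ordinal 6 2 isT) (@Ordinal 6 3 isT) isT) f70.
have f72 : X * D [:: 0; 2; 4; 7; 11; 3] < 0 := sw_p (@Dswap [:: 0; 2; 4; 3; 11; 7] (@Ordinal 6 3 isT) (@Ordinal 6 5 isT) isT) f71.
have f73 : X * D [:: 0; 2; 4; 7; 11; 5] < 0 := edge_n ((hW15 5 isT).2 isT) ((hW15 3 isT).2 isT) (@facet_rel W15 0 2 4 7 11 3 5 ((hW15 0 isT).1 isT) ((hW15 2 isT).1 isT) ((hW15 4 isT).1 isT) ((hW15 7 isT).1 isT) ((hW15 11 isT).1 isT)) f72.
have [W16 hW16] := getW h (l:=[:: 0; 2; 5; 7; 11]) isT.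
have f74 : 0 < X * D [:: 0; 2; 5; 7; 11; 4] := sw_n (@Dswap [:: 0; 2; 4; 7; 11; 5] (@Ordinal 6 2 isT) (@Ordinal 6 5 isT) isT) f73.
have f75 : 0 < X * D [:: 0; 2; 5; 7; 11; 1] := edge_p ((hW16 1 isT).2 isT) ((hW16 4 isT).2 isT) (@facet_rel W16 0 2 5 7 11 4 1 ((hW16 0 isT).1 isT) ((hW16 2 isT).1 isT) ((hW16 5 isT).1 isT) ((hW16 7 isT).1 isT) ((hW16 11 isT).1 isT)) f74.
have f76 : X * D [:: 0; 1; 5; 7; 11; 2] < 0 := sw_p (@Dswap [:: 0; 2; 5; 7; 11; 1] (@Ordinal 6 1 isT) (@Ordinal 6 5 isT) isT) f75.
have f77 : 0 < X * D [:: 0; 1; 2; 7; 11; 5] := sw_n (@Dswap [:: 0; 1; 5; 7; 11; 2] (@Ordinal 6 2 isT) (@Ordinal 6 5 isT) isT) f76.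
have f78 : X * D [:: 0; 1; 2; 7; 5; 11] < 0 := sw_p (@Dswap [:: 0; 1; 2; 7; 11; 5] (@Ordinal 6 4 isT) (@Ordinal 6 5 isT) isT) f77.
have f79 : 0 < X * D [:: 0; 1; 2; 3; 10; 5] := edge_p ((hW4 5 isT).2 isT) ((hW4 4 isT).2 isT) (@facet_rel W4 0 1 2 3 10 4 5 ((hW4 0 isT).1 isT) ((hW4 1 isT).1 isT) ((hW4 2 isT).1 isT) ((hW4 3 isT).1 isT) ((hW4 10 isT).1 isT)) f0.
have f80 : X * D [:: 0; 1; 2; 3; 5; 10] < 0 := sw_p (@Dswap [:: 0; 1; 2; 3; 10; 5] (@Ordinal 6 4 isT) (@Ordinal 6 5 isT) isT) f79.
have f81 : X * D [:: 0; 1; 2; 3; 5; 7] < 0 := edge_n ((hW0 7 isT).2 isT) ((hW0 10 isT).2 isT) (@facet_rel W0 0 1 2 3 5 10 7 ((hW0 0 isT).1 isT) ((hW0 1 isT).1 isT) ((hW0 2 isT).1 isT) ((hW0 3 isT).1 isT) ((hW0 5 isT).1 isT)) f80.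
have f82 : 0 < X * D [:: 0; 1; 2; 7; 5; 3] := sw_n (@Dswap [:: 0; 1; 2; 3; 5; 7] (@Ordinal 6 3 isT) (@Ordinal 6 5 isT) isT) f81.
have f83 : X * D [:: 0; 1; 2; 7; 3; 5] < 0 := sw_p (@Dswap [:: 0; 1; 2; 7; 5; 3] (@Ordinal 6 4 isT) (@Ordinal 6 5 isT) isT) f82.
have g2 := @gp_rel 0 1 2 7 3 5 9 11.
have f84 := prod_pn f54 f78.
have f85 := prod_nn f83 f65.
have f86 : D [:: 0; 1; 2; 7; 3; 11] * D [:: 0; 1; 2; 7; 5; 9] < 0 by clear -g2 f84 f85; lra.
have f87 : 0 < X * D [:: 0; 1; 2; 7; 5; 9] := un_nn f86 f53.
have f88 : X * D [:: 0; 1; 2; 9; 5; 7] < 0 := sw_p (@Dswap [:: 0; 1; 2; 7; 5; 9] (@Ordinal 6 3 isT) (@Ordinal 6 5 isT) isT) f87.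
have f89 : 0 < X * D [:: 0; 1; 2; 9; 12; 3] := sw_n (@Dswap [:: 0; 1; 3; 9; 12; 2] (@Ordinal 6 2 isT) (@Ordinal 6 5 isT) isT) f26.
have f90 : X * D [:: 0; 1; 2; 9; 3; 12] < 0 := sw_p (@Dswap [:: 0; 1; 2; 9; 12; 3] (@Ordinal 6 4 isT) (@Ordinal 6 5 isT) isT) f89.
have f91 : 0 < X * D [:: 0; 1; 2; 9; 7; 3] := sw_n (@Dswap [:: 0; 1; 2; 3; 7; 9] (@Ordinal 6 3 isT) (@Ordinal 6 5 isT) isT) f33.
have f92 : X * D [:: 0; 1; 2; 9; 3; 7] < 0 := sw_p (@Dswap [:: 0; 1; 2; 9; 7; 3] (@Ordinal 6 4 isT) (@Ordinal 6 5 isT) isT) f91.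
have f93 : 0 < X * D [:: 0; 1; 3; 4; 11; 5] := edge_p ((hW1 5 isT).2 isT) ((hW1 2 isT).2 isT) (@facet_rel W1 0 1 3 4 11 2 5 ((hW1 0 isT).1 isT) ((hW1 1 isT).1 isT) ((hW1 3 isT).1 isT) ((hW1 4 isT).1 isT) ((hW1 11 isT).1 isT)) f7.
have f94 : X * D [:: 0; 1; 3; 4; 5; 11] < 0 := sw_p (@Dswap [:: 0; 1; 3; 4; 11; 5] (@Ordinal 6 4 isT) (@Ordinal 6 5 isT) isT) f93.
have f95 : X * D [:: 0; 1; 3; 4; 5; 12] < 0 := edge_n ((hW0 12 isT).2 isT) ((hW0 11 isT).2 isT) (@facet_rel W0 0 1 3 4 5 11 12 ((hW0 0 isT).1 isT) ((hW0 1 isT).1 isT) ((hW0 3 isT).1 isT) ((hW0 4 isT).1 isT) ((hW0 5 isT).1 isT)) f94.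
have [W17 hW17] := getW h (l:=[:: 0; 1; 4; 5; 12]) isT.
have f96 : 0 < X * D [:: 0; 1; 4; 3; 5; 12] := sw_n (@Dswap [:: 0; 1; 3; 4; 5; 12] (@Ordinal 6 2 isT) (@Ordinal 6 3 isT) isT) f95.
have f97 : X * D [:: 0; 1; 4; 5; 3; 12] < 0 := sw_p (@Dswap [:: 0; 1; 4; 3; 5; 12] (@Ordinal 6 3 isT) (@Ordinal 6 4 isT) isT) f96.
have f98 : 0 < X * D [:: 0; 1; 4; 5; 12; 3] := sw_n (@Dswap [:: 0; 1; 4; 5; 3; 12] (@Ordinal 6 4 isT) (@Ordinal 6 5 isT) isT) f97.
have f99 : 0 < X * D [:: 0; 1; 4; 5; 12; 9] := edge_p ((hW17 9 isT).2 isT) ((hW17 3 isT).2 isT) (@facet_rel W17 0 1 4 5 12 3 9 ((hW17 0 isT).1 isT) ((hW17 1 isT).1 isT) ((hW17 4 isT).1 isT) ((hW17 5 isT).1 isT) ((hW17 12 isT).1 isT)) f98.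
have [W18 hW18] := getW h (l:=[:: 0; 1; 5; 9; 12]) isT.
have f100 : X * D [:: 0; 1; 5; 4; 12; 9] < 0 := sw_p (@Dswap [:: 0; 1; 4; 5; 12; 9] (@Ordinal 6 2 isT) (@Ordinal 6 3 isT) isT) f99.
have f101 : 0 < X * D [:: 0; 1; 5; 9; 12; 4] := sw_n (@Dswap [:: 0; 1; 5; 4; 12; 9] (@Ordinal 6 3 isT) (@Ordinal 6 5 isT) isT) f100.
have f102 : 0 < X * D [:: 0; 1; 5; 9; 12; 2] := edge_p ((hW18 2 isT).2 isT) ((hW18 4 isT).2 isT) (@facet_rel W18 0 1 5 9 12 4 2 ((hW18 0 isT).1 isT) ((hW18 1 isT).1 isT) ((hW18 5 isT).1 isT) ((hW18 9 isT).1 isT) ((hW18 12 isT).1 isT)) f101.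
have f103 : X * D [:: 0; 1; 2; 9; 12; 5] < 0 := sw_p (@Dswap [:: 0; 1; 5; 9; 12; 2] (@Ordinal 6 2 isT) (@Ordinal 6 5 isT) isT) f102.
have f104 : 0 < X * D [:: 0; 1; 2; 9; 5; 12] := sw_n (@Dswap [:: 0; 1; 2; 9; 12; 5] (@Ordinal 6 4 isT) (@Ordinal 6 5 isT) isT) f103.
have f105 : X * D [:: 0; 1; 2; 3; 5; 9] < 0 := edge_n ((hW0 9 isT).2 isT) ((hW0 10 isT).2 isT) (@facet_rel W0 0 1 2 3 5 10 9 ((hW0 0 isT).1 isT) ((hW0 1 isT).1 isT) ((hW0 2 isT).1 isT) ((hW0 3 isT).1 isT) ((hW0 5 isT).1 isT)) f80.
have f106 : 0 < X * D [:: 0; 1; 2; 9; 5; 3] := sw_n (@Dswap [:: 0; 1; 2; 3; 5; 9] (@Ordinal 6 3 isT) (@Ordinal 6 5 isT) isT) f105.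
have f107 : X * D [:: 0; 1; 2; 9; 3; 5] < 0 := sw_p (@Dswap [:: 0; 1; 2; 9; 5; 3] (@Ordinal 6 4 isT) (@Ordinal 6 5 isT) isT) f106.
have f108 : 0 < X * D [:: 1; 2; 4; 7; 9; 12] := edge_p ((hW12 12 isT).2 isT) ((hW12 10 isT).2 isT) (@facet_rel W12 1 2 4 7 9 10 12 ((hW12 1 isT).1 isT) ((hW12 2 isT).1 isT) ((hW12 4 isT).1 isT) ((hW12 7 isT).1 isT) ((hW12 9 isT).1 isT)) f45.
have [W19 hW19] := getW h (l:=[:: 1; 2; 7; 9; 12]) isT.
have f109 : X * D [:: 1; 2; 7; 4; 9; 12] < 0 := sw_p (@Dswap [:: 1; 2; 4; 7; 9; 12] (@Ordinal 6 2 isT) (@Ordinal 6 3 isT) isT) f108.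
have f110 : 0 < X * D [:: 1; 2; 7; 9; 4; 12] := sw_n (@Dswap [:: 1; 2; 7; 4; 9; 12] (@Ordinal 6 3 isT) (@Ordinal 6 4 isT) isT) f109.
have f111 : X * D [:: 1; 2; 7; 9; 12; 4] < 0 := sw_p (@Dswap [:: 1; 2; 7; 9; 4; 12] (@Ordinal 6 4 isT) (@Ordinal 6 5 isT) isT) f110.
have f112 : X * D [:: 1; 2; 7; 9; 12; 0] < 0 := edge_n ((hW19 0 isT).2 isT) ((hW19 4 isT).2 isT) (@facet_rel W19 1 2 7 9 12 4 0 ((hW19 1 isT).1 isT) ((hW19 2 isT).1 isT) ((hW19 7 isT).1 isT) ((hW19 9 isT).1 isT) ((hW19 12 isT).1 isT)) f111.
have f113 : 0 < X * D [:: 0; 2; 7; 9; 12; 1] := sw_n (@Dswap [:: 1; 2; 7; 9; 12; 0] (@Ordinal 6 0 isT) (@Ordinal 6 5 isT) isT) f112.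
have f114 : X * D [:: 0; 1; 7; 9; 12; 2] < 0 := sw_p (@Dswap [:: 0; 2; 7; 9; 12; 1] (@Ordinal 6 1 isT) (@Ordinal 6 5 isT) isT) f113.
have f115 : 0 < X * D [:: 0; 1; 2; 9; 12; 7] := sw_n (@Dswap [:: 0; 1; 7; 9; 12; 2] (@Ordinal 6 2 isT) (@Ordinal 6 5 isT) isT) f114.
have f116 : X * D [:: 0; 1; 2; 9; 7; 12] < 0 := sw_p (@Dswap [:: 0; 1; 2; 9; 12; 7] (@Ordinal 6 4 isT) (@Ordinal 6 5 isT) isT) f115.
have g3 := @gp_rel 0 1 2 9 3 5 7 12.
have f117 := prod_nn f88 f90.
have f118 := prod_np f92 f104.
have f119 := prod_nn f107 f116.
by clear -g3 f117 f118 f119; lra.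
Qed.

End Gen.

Theorem mainTheorem4 (R : realType) (p : 'I_14 -> 'rV[R]_5) :
  ~ realizes_Pi p.
Proof. exact: (@main_contra R p). Qed.
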